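(* Let $G$ be a finite abelian group and let $k \in \mathbb{N}$. Let $B$ be a zero-sum sequence over $G$ such that $\max\mathsf{L}(B)=k$ and $|B|=\mathsf{D}_k(G)$. Then there exist some $g \in G$ with $\mathrm{ord}(g)=\exp(G)$ and some factorization $\zeta_g$ of $B$ with $|\zeta_g|=k$ in which the minimal zero-sum sequence $g^{\mathrm{ord}(g)}$ (the element $g$ repeated $\mathrm{ord}(g)$ times) occurs as a factor at least \[\left\lfloor\frac{k - (\eta(G) - \mathsf{D}(G^-))}{\exp(G)|\mathcal{A}(G)|}\right\rfloor\] times.
   Context: $G$ is written additively. A sequence over $G$ is a finite unordered list of elements with repetitions. A zero-sum sequence has terms summing to $0$; a minimal zero-sum sequence is a non-empty zero-sum sequence with no proper non-empty zero-sum subsequence; $\mathcal{A}(G)$ is the set of these. A factorization of a zero-sum sequence $B$ is a formal unordered product of minimal zero-sum sequences whose product is $B$; $|\zeta|$ is its number of factors; $\mathsf{L}(B)$ is the set of lengths of factorizations of $B$. $\mathsf{D}_k(G)$ is the smallest $\ell$ such that every sequence of length at least $\ell$ has $k$ disjoint non-empty zero-sum subsequences; $\mathsf{D}(H)=\mathsf{D}_1(H)$. $\eta(G)$ is the smallest $\ell$ such that every sequence over $G$ of length at least $\ell$ has a non-empty zero-sum subsequence of length at most $\exp(G)$. $G^-$ denotes an abelian group with $G\cong G^-\oplus C_{\exp(G)}$. *)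

(* Defs.v *)
From HB Require Import structures.
From mathcomp Require Import all_boot all_order all_algebra all_fingroup all_solvable.
Set Implicit Arguments. Unset Strict Implicit. Unset Printing Implicit Defensive.
Import GRing.Theory.
Local Open Scope ring_scope.

(* A finite abelian group G, written additively, is a finZmodType.  It is also
   viewed as a finGroupType (via FinRing.Zmodule_to_finGroup) to use the
   library notions of element order #[g], exponent, subgroups and direct
   products. *)
Notation gr G := (FinRing.Zmodule_to_finGroup G).

Section Seqs.
Variable G : finZmodType.

(* Sequences over G are modelled by lists, considered up to permutation. *)
Definition zero_sum (s : seq G) : bool := \sum_(x <- s) x == 0.

Definition subseqM (t s : seq G) : Prop := exists u, perm_eq s (t ++ u).

(* minimal zero-sum sequence: non-empty zero-sum, no proper non-empty
   zero-sum subsequence; sub-sequences are selected by a bit mask m, the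
   subsequence being proper iff the complementary selection is non-empty *)
Definition minimal_zs (s : seq G) : bool :=
  [&& s != [::], zero_sum s &
      [forall m : (size s).-tuple bool,
        (mask m s != [::]) && (mask (map negb m) s != [::]) ==>
        ~~ zero_sum (mask m s)]].

Definition factorization (B : seq G) (z : seq (seq G)) : Prop :=
  (forall A, A \in z -> minimal_zs A) /\ perm_eq B (flatten z).

Definition maxL_eq (B : seq G) (k : nat) : Prop :=
  (exists z, factorization B z /\ size z = k) /\
  (forall z, factorization B z -> size z <= k)%N.

Definition has_k_disjoint (k : nat) (s : seq G) : Prop :=
  exists ts : seq (seq G), [/\ size ts = k,
    (forall t, t \in ts -> t != [::] /\ zero_sum t) &
    subseqM (flatten ts) s].

Definition Dk_prop (K : {set G}) (k l : nat) : Prop :=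
  forall s : seq G, all (mem K) s -> (l <= size s)%N -> has_k_disjoint k s.

Definition is_Dk (K : {set G}) (k n : nat) : Prop :=
  Dk_prop K k n /\ forall l, Dk_prop K k l -> (n <= l)%N.

Definition exponentG : nat := exponent [set: gr G].
Definition ordG (g : G) : nat := #[g : gr G]%g.

Definition eta_prop (l : nat) : Prop :=
  forall s : seq G, (l <= size s)%N ->
    exists t, [/\ subseqM t s, t != [::], zero_sum t & (size t <= exponentG)%N].

Definition is_eta (n : nat) : Prop :=
  eta_prop n /\ forall l, eta_prop l -> (n <= l)%N.

(* |A(G)|: minimal zero-sum sequences counted as multisets, i.e. by their
   multiplicity functions.  Every multiplicity of an element g in a minimal
   zero-sum sequence is at most ord(g) <= |G|, so multiplicity functions with
   values in 'I_(#|G|.+1) represent every element of A(G) exactly once. *)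
Definition seq_of_mult (f : {ffun G -> 'I_(#|G|.+1)}) : seq G :=
  flatten [seq nseq (f x) x | x <- enum G].

Definition cardA : nat :=
  #|[set f : {ffun G -> 'I_(#|G|.+1)} | minimal_zs (seq_of_mult f)]|.

End Seqs.

(* Main.v *)
Require Import Defs.
From HB Require Import structures.
From mathcomp Require Import all_boot all_order all_algebra all_fingroup all_solvable.
From mathcomp Require Import zify.
From Stdlib Require Import Classical.
Import GRing.Theory.
Set Implicit Arguments. Unset Strict Implicit. Unset Printing Implicit Defensive.


Section S.
Variable G : finZmodType.
Implicit Types (s t u : seq G).

Lemma count_mask_split (P : pred G) m s : size m = size s ->
  count P (mask m s) + count P (mask (map negb m) s) = count P s.
Proof.
elim: s m => [|x s IH] [|b m] //= [Hs]; case: b => /=; rewrite -(IH m Hs); lia.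
Qed.

Lemma mask_split m s : size m = size s ->
  perm_eq s (mask m s ++ mask (map negb m) s).
Proof. by move=> H; apply/seq.permP => P; rewrite count_cat count_mask_split. Qed.

Lemma zs_cat s t : zero_sum (s ++ t) = ((\sum_(x <- s) x) + \sum_(x <- t) x == 0)%R.
Proof. by rewrite /zero_sum big_cat. Qed.

Lemma zs_perm s t : perm_eq s t -> zero_sum s = zero_sum t.
Proof. by move=> H; rewrite /zero_sum (perm_big _ H). Qed.

Lemma zs_catr s t : zero_sum (s ++ t) -> zero_sum s -> zero_sum t.
Proof. rewrite zs_cat /zero_sum => /eqP H /eqP H1; by rewrite H1 add0r in H; apply/eqP. Qed.

Lemma minP s : minimal_zs s <->
  [/\ s != [::], zero_sum s & forall t u, perm_eq s (t ++ u) -> t != [::] -> u != [::] -> ~~ zero_sum t].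
Proof.
split.
- case/and3P=> H1 H2 /forallP H3; split=> // t u Hp Ht Hu.
  have : forall x, count_mem x t <= count_mem x s.
    by move=> x; rewrite (seq.permP Hp) count_cat leq_addr.
  case/count_maskP=> m Hm Hpt.
  have Hc := mask_split Hm.
  have Hpu : perm_eq u (mask (map negb m) s).
    by rewrite -(perm_cat2l t) -(permPl Hp) (permPl Hc) perm_cat2r perm_sym.
  have := H3 (Tuple (introT eqP Hm)) => /=.
  rewrite (zs_perm Hpt).
  have -> : (mask m s != [::]) = true.
    by apply/eqP=> E; move: Ht; rewrite -size_eq0 (perm_size Hpt) E.
  have -> : (mask (map negb m) s != [::]) = true.
    by apply/eqP=> E; move: Hu; rewrite -size_eq0 (perm_size Hpu) E.
  by [].
- case=> H1 H2 H3; rewrite /minimal_zs H1 H2 /=; apply/forallP=> m.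
  apply/implyP=> /andP[Ha Hb]; apply: H3 Ha Hb.
  by apply: mask_split; rewrite size_tuple.
Qed.

Lemma min_perm s t : perm_eq s t -> minimal_zs s -> minimal_zs t.
Proof.
move=> Hp /minP[H1 H2 H3]; apply/minP; split.
- by move: H1; rewrite -!size_eq0 (perm_size Hp).
- by rewrite -(zs_perm Hp).
- by move=> a b Hab; apply: H3; rewrite (permPl Hp).
Qed.

Lemma fact_exists s : zero_sum s -> exists z, factorization s z.
Proof.
elim: {s}(size s) {-2}s (leqnn (size s)) => [|n IH] s.
  by rewrite leqn0 size_eq0 => /eqP -> _; exists [::]; split.
move=> Hs Hz; have [->|Hn] := eqVneq s [::]; first by exists [::].
case Hm: (minimal_zs s).
  by exists [:: s]; split; [move=> A; rewrite inE => /eqP ->|rewrite /= cats0].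
move: Hm; rewrite /minimal_zs Hn Hz /= => /negbT /forallPn [[m /= /eqP Hsm]].
rewrite negb_imply => /andP[/andP[Ha Hb] Hc]; rewrite negbK in Hc.
have Hsp := mask_split Hsm.
have Hd : zero_sum (mask (map negb m) s).
  by apply: (zs_catr _ Hc); rewrite -(zs_perm Hsp).
have Hsz := perm_size Hsp; rewrite size_cat in Hsz.
move: Ha Hb; rewrite -!size_eq0 => Ha Hb.
have [z1 [Hz1 Hp1]] : exists z, factorization (mask m s) z.
  apply: IH Hc.
  set a := size (mask m s) in Hsz Ha *; set b := size (mask (map negb m) s) in Hsz Hb; set c := size s in Hs Hsz; lia.
have [z2 [Hz2 Hp2]] : exists z, factorization (mask (map negb m) s) z.
  apply: IH Hd.
  set a := size (mask m s) in Hsz Ha; set b := size (mask (map negb m) s) in Hsz Hb *; set c := size s in Hs Hsz; lia.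
exists (z1 ++ z2); split.
  by move=> A; rewrite mem_cat => /orP[/Hz1|/Hz2].
by rewrite flatten_cat (permPl Hsp) perm_cat.
Qed.

End S.


Section S2.
Variable G : finZmodType.
Implicit Types (s t u : seq G) (x : G).

Lemma e_gt0 : 0 < exponentG G.
Proof. exact: exponent_gt0. Qed.

Lemma o_gt0 x : 0 < ordG x.
Proof. exact: order_gt0. Qed.

Lemma o_dvd x : ordG x %| exponentG G.
Proof. by apply: dvdn_exponent; rewrite inE. Qed.

Lemma o_le x : ordG x <= exponentG G.
Proof. exact: dvdn_leq e_gt0 (o_dvd x). Qed.

Lemma mulrn_eq0 x n : (x *+ n == 0)%R = (ordG x %| n).
Proof. by rewrite /ordG order_dvdn. Qed.

Lemma sum_nseq x n : (\sum_(y <- nseq n x) y)%R = (x *+ n)%R.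
Proof. by rewrite big_nseq; elim: n => //= n ->; rewrite mulrS. Qed.

Lemma o_le_card x : ordG x <= #|G|.
Proof.
have := @order_dvdG _ [set: gr G] x; rewrite inE => /(_ isT) H.
rewrite /ordG; apply: leq_trans (dvdn_leq _ H) _; rewrite cardsT //.
by apply/card_gt0P; exists x.
Qed.

Lemma atom_nseq x : minimal_zs (nseq (ordG x) x).
Proof.
apply/minP; split.
- by rewrite -size_eq0 size_nseq -lt0n o_gt0.
- by rewrite /zero_sum sum_nseq mulrn_eq0.
- move=> t u Hp Ht Hu.
  have Ha : all (pred1 x) t.
    apply/allP=> y Hy; have : y \in nseq (ordG x) x by rewrite (perm_mem Hp) mem_cat Hy.
    by rewrite mem_nseq => /andP[].
  rewrite (all_pred1P _ _ Ha) /zero_sum sum_nseq mulrn_eq0.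
  have := perm_size Hp; rewrite size_cat size_nseq => Hs.
  move: Ht Hu; rewrite -!size_eq0 => Ht Hu.
  apply/negP=> /dvdn_leq; rewrite lt0n Ht => /(_ isT); lia.
Qed.

Lemma count_le_o A x : minimal_zs A -> count_mem x A <= ordG x.
Proof.
move=> HA; rewrite leqNgt; apply/negP=> Hc.
have : forall y, count_mem y (nseq (ordG x) x) <= count_mem y A.
  move=> y; rewrite count_nseq /=; case: eqP => [<-|_] /=; [rewrite mul1n; exact: ltnW | by rewrite mul0n].
case/count_subseqP=> s' /perm_to_subseq [u Hu] Hp.
case/minP: HA => _ _ /(_ (nseq (ordG x) x) u).
have Hp2 : perm_eq A (nseq (ordG x) x ++ u) by rewrite (permPl Hu) perm_cat2r perm_sym.
move/(_ Hp2); rewrite -!size_eq0 size_nseq -lt0n o_gt0.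
have : size u != 0.
  have := perm_size Hp2; rewrite size_cat size_nseq.
  have := count_size (pred1 x) A; lia.
move=> -> /(_ isT isT); case/minP: (atom_nseq x) => _ -> _ //.
Qed.

Lemma count_le_card A x : minimal_zs A -> count_mem x A <= #|G|.
Proof. by move=> H; apply: leq_trans (count_le_o x H) (o_le_card x). Qed.

Definition keyA (A : seq G) : {ffun G -> 'I_(#|G|.+1)} :=
  [ffun x => inord (count_mem x A)].

Lemma count_som (f : {ffun G -> 'I_(#|G|.+1)}) y :
  count_mem y (seq_of_mult f) = f y.
Proof.
rewrite /seq_of_mult count_flatten -map_comp.
rewrite (eq_map (g := fun x => (x == y) * f x)); last first.
  by move=> x /=; rewrite count_nseq /= eq_sym.
rewrite sumnE big_map big_enum /= (bigD1 y) //= eqxx mul1n big1 ?addn0 //.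
by move=> x /negbTE ->.
Qed.

Lemma som_key A : minimal_zs A -> perm_eq (seq_of_mult (keyA A)) A.
Proof.
move=> HA; apply/allP=> y _ /=.
by rewrite count_som ffunE inordK // ltnS count_le_card.
Qed.

Lemma key_perm A A' : perm_eq A A' -> keyA A = keyA A'.
Proof. by move=> H; apply/ffunP=> x; rewrite !ffunE (seq.permP H). Qed.

Lemma key_eq A A' : minimal_zs A -> minimal_zs A' -> keyA A = keyA A' -> perm_eq A A'.
Proof.
move=> HA HA' E; have := som_key HA; rewrite E => H.
by rewrite -(permPl H) som_key.
Qed.

End S2.


Lemma count_flatten_nseq (T : eqType) (P : pred T) n (s : seq T) :
  count P (flatten (nseq n s)) = n * count P s.
Proof. by elim: n => //= n IH; rewrite count_cat IH mulSn. Qed.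

Lemma flatten_perm_all (T : eqType) (s : seq (seq T)) (A : seq T) :
  (forall a, a \in s -> perm_eq a A) -> perm_eq (flatten s) (flatten (nseq (size s) A)).
Proof.
elim: s => //= a s IH H; apply: perm_cat; first by apply: H; rewrite inE eqxx.
by apply: IH => b Hb; apply: H; rewrite inE Hb orbT.
Qed.

Lemma flatten_flatten_nseq (T : Type) n (R : seq (seq T)) :
  flatten (flatten (nseq n R)) = flatten (nseq n (flatten R)).
Proof. by elim: n => //= n IH; rewrite flatten_cat IH. Qed.

Section S3.
Variable G : finZmodType.
Implicit Types (s t u A : seq G) (x : G).
Local Notation e := (exponentG G).

Definition piecesR A : seq (seq G) :=
  flatten [seq nseq (e %/ ordG x) (nseq (ordG x) x) | x <- A].

Lemma piecesR_atoms A C : C \in piecesR A -> minimal_zs C.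
Proof.
case/flattenP=> D /mapP[x _ ->]; rewrite mem_nseq => /andP[_ /eqP ->].
exact: atom_nseq.
Qed.

Lemma mem_piecesR A x : x \in A -> ordG x = e -> nseq (ordG x) x \in piecesR A.
Proof.
move=> Hx Ho; apply/flattenP; exists (nseq (e %/ ordG x) (nseq (ordG x) x)).
  by apply/mapP; exists x.
by rewrite mem_nseq Ho divnn e_gt0 eqxx.
Qed.

Lemma count_piecesR A (P : pred G) :
  count P (flatten (piecesR A)) = e * count P A.
Proof.
elim: A => [|x A IH]; first by rewrite muln0.
rewrite /piecesR /= flatten_cat count_cat -/(piecesR A) IH.
rewrite count_flatten_nseq count_nseq mulnCA divnK ?o_dvd //; lia.
Qed.

Lemma size_piecesR A : size (piecesR A) = sumn [seq e %/ ordG x | x <- A].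
Proof.
elim: A => //= x A IH; rewrite /piecesR /= size_cat size_nseq -/(piecesR A) IH //.
Qed.

Lemma exchange B k z A0 q : factorization B z -> size z = k ->
  minimal_zs A0 -> e * q <= count (fun A => keyA A == keyA A0) z ->
  exists z2, [/\ factorization B z2,
     size z2 = q * size (piecesR A0) + (k - e * q) &
     forall Q : pred (seq G), q * count Q (piecesR A0) <= count Q z2].
Proof.
move=> [Hz Hp] Hk HA0 Hc.
set P := (fun A => keyA A == keyA A0) in Hc.
set F := filter P z; set NF := filter (predC P) z.
have HzF : perm_eq z (F ++ NF) by rewrite perm_sym perm_filterC.
have HsF : size F = count P z by rewrite size_filter.
exists (flatten (nseq q (piecesR A0)) ++ drop (e * q) F ++ NF); split.
- split.
  + move=> C; rewrite !mem_cat => /or3P[|H|H].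
    * by case/flattenP=> D; rewrite mem_nseq => /andP[_ /eqP ->]; apply: piecesR_atoms.
    * by apply: Hz; move: (mem_drop H); rewrite mem_filter => /andP[].
    * by apply: Hz; move: H; rewrite mem_filter => /andP[].
  + rewrite (permPl Hp) (permPl (perm_flatten HzF)) !flatten_cat -[F in flatten F](cat_take_drop (e * q)).
    rewrite flatten_cat -catA perm_cat2r.
    have Ht : perm_eq (flatten (take (e * q) F)) (flatten (nseq (e * q) A0)).
      have := @flatten_perm_all _ (take (e * q) F) A0; rewrite size_takel ?HsF //.
      apply => a Ha; have := mem_take Ha; rewrite mem_filter => /andP[/eqP Hk1 Ha'].
      by apply: key_eq => //; apply: Hz.
    rewrite (permPl Ht); apply/seq.permP => Q.
    by rewrite flatten_flatten_nseq !count_flatten_nseq count_piecesR -mulnA mulnCA.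
- rewrite !size_cat size_flatten /shape map_nseq sumn_nseq size_drop HsF.
  have : count P z + size NF = k by rewrite size_filter count_predC Hk.
  set a := count P z in Hc *; set b := size NF; set c := size (piecesR A0).
  move=> Hab; rewrite -Hab; lia.
- by move=> Q; rewrite !count_cat count_flatten_nseq leq_addr.
Qed.

Lemma exch_bound B k z A0 q : factorization B z -> size z = k ->
  (forall z', factorization B z' -> size z' <= k) ->
  minimal_zs A0 -> 0 < q -> e * q <= count (fun A => keyA A == keyA A0) z ->
  sumn [seq e %/ ordG x | x <- A0] <= e.
Proof.
move=> Hf Hk Hmax HA0 Hq Hc.
have [z2 [Hf2 Hs2 _]] := exchange Hf Hk HA0 Hc.
have := Hmax _ Hf2; rewrite Hs2 size_piecesR.
have : count (fun A => keyA A == keyA A0) z <= k by rewrite -Hk count_size.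
set S := sumn _; set c := count _ _ in Hc *.
move=> H1 H2; rewrite -(leq_pmul2l Hq) [q * e]mulnC.
set u := q * S in H2 *; set v := e * q in Hc H2 *; lia.
Qed.

Lemma sumn_ge_size (f : G -> nat) A :
  (forall y, y \in A -> 0 < f y) -> size A <= sumn (map f A).
Proof.
elim: A => //= y A IH H; rewrite -add1n leq_add ?H ?inE ?eqxx //.
by apply: IH => w Hw; apply: H; rewrite inE Hw orbT.
Qed.

Lemma sumn_eq_size (f : G -> nat) A :
  (forall y, y \in A -> 0 < f y) -> sumn (map f A) <= size A ->
  forall y, y \in A -> f y = 1.
Proof.
elim: A => //= y A IH H Hs w; rewrite inE => /orP[/eqP ->|Hw].
  have := sumn_ge_size (fun w Hw => H w (mem_behead Hw)).
  have := H y (mem_head _ _); rewrite /=; lia.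
apply: IH Hw; first by move=> v Hv; apply: H; rewrite inE Hv orbT.
have := H y (mem_head _ _); lia.
Qed.

Lemma div_pos x : 0 < e %/ ordG x.
Proof. by rewrite divn_gt0 ?o_gt0 ?o_le. Qed.

Lemma div1_ord x : e %/ ordG x = 1 -> ordG x = e.
Proof. by move=> H; rewrite -(divnK (o_dvd x)) H mul1n. Qed.


End S3.


Section S4.
Variable G : finZmodType.
Implicit Types (s t u A C : seq G) (x : G).
Local Notation e := (exponentG G).

Lemma fact_nonempty C f : factorization C f -> C != [::] -> 0 < size f.
Proof.
case: f => // [[_ Hp]] /=; move/perm_size: Hp; rewrite -size_eq0 => -> //.
Qed.

Lemma fact_cat C D f g : factorization C f -> factorization D g ->
  factorization (C ++ D) (f ++ g).
Proof.
move=> [Hf Pf] [Hg Pg]; split; first by move=> A; rewrite mem_cat => /orP[/Hf|/Hg].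
by rewrite flatten_cat perm_cat.
Qed.

Lemma fact_perm C D f : perm_eq C D -> factorization D f -> factorization C f.
Proof. by move=> H [Hf Pf]; split=> //; rewrite (permPl H). Qed.

Lemma eta_pos eta : eta_prop G eta -> 0 < eta.
Proof.
case: eta => // /(_ [::] (leqnn 0)) [t [[u Hu] Ht _ _]].
by case: t Ht Hu => // a t' _ /perm_size.
Qed.

Lemma claim eta C j : eta_prop G eta -> zero_sum C ->
  (forall f, factorization C f -> size f <= j) -> size C < j * e + eta.
Proof.
move=> Heta; have Hpos := eta_pos Heta.
elim: {C}(size C) {-2}C (leqnn (size C)) j => [|n IH] C HC j Hz Hmax.
  by apply: leq_trans (leq_addl _ _); apply: leq_ltn_trans HC Hpos.
case: (ltnP (size C) eta) => Hlt; first by apply: leq_trans Hlt (leq_addl _ _).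
have [t [[u Hu] Ht Htz Hte]] := Heta C Hlt.
have Huz : zero_sum u by apply: (zs_catr (s := t)) => //; rewrite -(zs_perm Hu).
have [ft Hft] := fact_exists Htz; have [fu Hfu] := fact_exists Huz.
have H1 := Hmax _ (fact_perm Hu (fact_cat Hft Hfu)); rewrite size_cat in H1.
have Hft0 := fact_nonempty Hft Ht.
have Hsz := perm_size Hu; rewrite size_cat in Hsz.
move: Ht; rewrite -size_eq0 => Ht.
case: j Hmax H1 => [|j] Hmax H1; first by move: H1 Hft0; set a := size ft; set b := size fu; lia.
have IHu : size u < j * e + eta.
  apply: IH => //.
    by set a := size t in Hsz Ht; set b := size u in Hsz *; set c := size C in HC Hsz; lia.
  move=> f Hf; have := Hmax _ (fact_perm Hu (fact_cat Hft Hf)); rewrite size_cat.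
  by set a := size ft in Hft0 *; set b := size f; lia.
rewrite Hsz mulSn.
by set a := size t in Hsz Ht Hte *; set b := size u in Hsz IHu *; set c := j * e in IHu *; lia.
Qed.

Lemma zs_flatten (ss : seq (seq G)) : (forall a, a \in ss -> zero_sum a) -> zero_sum (flatten ss).
Proof.
elim: ss => [|a ss IH] H /=; first by rewrite /zero_sum big_nil.
rewrite zs_cat; move: (H a (mem_head _ _)) (IH (fun b Hb => H b (ltac:(by rewrite inE Hb orbT)))).
by rewrite /zero_sum => /eqP -> /eqP ->; rewrite addr0.
Qed.

Lemma flatten_short (ss : seq (seq G)) : (forall a, a \in ss -> size a < e) ->
  size (flatten ss) + size ss <= size ss * e.
Proof.
elim: ss => [|a ss IH] H //=.
have := H a (mem_head _ _); have := IH (fun b Hb => H b (ltac:(by rewrite inE Hb orbT))).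
rewrite size_cat mulSn; set x := size a; set y := size (flatten ss); set z := size ss * e.
lia.
Qed.

Lemma short_bound eta B k z : eta_prop G eta -> factorization B z -> size z = k ->
  (forall z', factorization B z' -> size z' <= k) ->
  size B + count (fun A => size A < e) z < k * e + eta.
Proof.
move=> Heta [Hz Hp] Hk Hmax.
set sh := (fun A : seq G => size A < e).
set SH := filter sh z; set NS := filter (predC sh) z.
have HzF : perm_eq z (SH ++ NS) by rewrite perm_sym perm_filterC.
have HB : perm_eq B (flatten SH ++ flatten NS).
  by rewrite (permPl Hp) -flatten_cat perm_flatten.
have Hk2 : size SH + size NS = k by rewrite !size_filter count_predC Hk.
have HNz : zero_sum (flatten NS).
  apply: zs_flatten => a; rewrite mem_filter => /andP[_ /Hz].
  by case/and3P.
have HN : size (flatten NS) < size NS * e + eta.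
  apply: claim => // f Hf.
  have Hf2 : factorization B (SH ++ f).
    apply: (fact_perm HB); apply: fact_cat => //; split=> //.
    by move=> A; rewrite mem_filter => /andP[_ /Hz].
  by have := Hmax _ Hf2; rewrite size_cat -Hk2 leq_add2l.
have HS : size (flatten SH) + size SH <= size SH * e.
  by apply: flatten_short => a; rewrite mem_filter => /andP[].
rewrite (perm_size HB) size_cat -size_filter -/SH.
move: Hk2 HN HS; set a := size (flatten SH); set b := size (flatten NS);
  set c := size SH; set d := size NS.
move=> <-; rewrite mulnDl; set x := c * e; set y := d * e; lia.
Qed.

End S4.


Section S5.
Variable G : finZmodType.
Implicit Types (s t u A C : seq G) (x : G).
Local Notation e := (exponentG G).

Lemma sum_inK (K : {group gr G}) s : all (mem K) s -> (\sum_(x <- s) x)%R \in K.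
Proof.
elim: s => [|x s IH] /=; first by rewrite big_nil group1.
by case/andP=> Hx Hs; rewrite big_cons; apply: (@groupM _ K x) => //; apply: IH.
Qed.

Lemma count_in_flatten (P : pred G) (ts : seq (seq G)) t :
  t \in ts -> count P t <= count P (flatten ts).
Proof.
elim: ts => //= a ts IH; rewrite inE count_cat => /orP[/eqP ->|H].
  exact: leq_addr.
by apply: leq_trans (IH H) (leq_addl _ _).
Qed.

Lemma sumn_ge_const (ts : seq (seq G)) (f : seq G -> nat) c :
  (forall t, t \in ts -> c <= f t) -> size ts * c <= sumn (map f ts).
Proof.
elim: ts => //= a ts IH H; rewrite mulSn leq_add ?H ?mem_head //.
by apply: IH => b Hb; apply: H; rewrite inE Hb orbT.
Qed.

Lemma sum_split x t : (\sum_(y <- t) y)%R =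
  (x *+ count_mem x t + \sum_(y <- filter (predC1 x) t) y)%R.
Proof.
rewrite (bigID (pred1 x)) /= big_filter; congr (_ + _)%R.
rewrite (eq_bigr (fun _ => x)); last by move=> y /eqP.
by rewrite big_const_seq; elim: (count _ _) => //= n ->; rewrite mulrS.
Qed.

Lemma lowerB (K : {group gr G}) (g0 : G) (k : nat) (B : seq G) (DGm : nat) :
  ordG g0 = e -> (K \x <[g0 : gr G]> = [set: gr G])%g ->
  is_Dk (K : {set G}) 1 DGm -> is_Dk [set: G] k (size B) -> 0 < k ->
  k * e + DGm <= (size B).+1.
Proof.
move=> Ho Hd [HD1 HD2] [Hk1 _] Hk0.
have [_ _ _ Hcap] := dprodP Hd.
have capP : forall y : G, y \in K -> y \in <[g0 : gr G]>%g -> y = 0%R.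
  move=> y H1 H2; have : y \in (K :&: <[g0 : gr G]>)%g by rewrite inE H1 H2.
  by rewrite Hcap => /set1P.
have HDpos : 0 < DGm.
  case: DGm HD1 {HD2} => // HD1.
  have [ts [Hs Hne [u Hu]]] := HD1 [::] isT (leqnn 0).
  case: ts Hs Hne Hu => [|t [|]] //= _ Hne Hu.
  have [Ht _] := Hne t (mem_head _ _).
  by case: t Ht Hu {Hne} => // a t' _ /perm_size.
have [T [HTK HTs HTn]] : exists T, [/\ all (mem (K : {set G})) T, DGm.-1 <= size T &
     ~ has_k_disjoint 1 T].
  apply: NNPP => Hn.
  have : Dk_prop (K : {set G}) 1 DGm.-1.
    move=> T HT1 HT2; apply: NNPP => H; apply: Hn; exists T; split => //.
  by move/HD2; case: DGm HDpos {HD1 HD2 Hn} => // n _; rewrite /= ltnn.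
rewrite leqNgt; apply/negP => Hlt.
have He := @e_gt0 G.
set W := T ++ nseq (k * e).-1 g0.
have Hke : 0 < k * e by rewrite muln_gt0 Hk0.
have HW : size B <= size W.
  rewrite /W size_cat size_nseq; move: Hlt HTs Hke; set ke := k * e; set b := size B; set c := size T.
  lia.
have [ts [Hts Hne [u Hu]]] := Hk1 W (introT allP (fun y _ => in_setT y)) HW.
have cT : count_mem g0 T = 0.
  apply/count_memPn/negP => Hin.
  have H0 : g0 = 0%R by apply: capP; [exact: (allP HTK) | exact: cycle_id].
  apply: HTn; exists [:: [:: g0]]; split => //.
    move=> t; rewrite inE => /eqP ->; split => //.
    by rewrite /zero_sum big_seq1 H0.
  by exists (rem g0 T); apply: perm_to_rem.
have HtW : forall t y, t \in ts -> y \in t -> y \in W.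
  move=> t y Ht Hy; rewrite (perm_mem Hu) mem_cat; apply/orP; left.
  by apply/flattenP; exists t.
have Hall : forall t, t \in ts -> e <= count_mem g0 t.
  move=> t Ht; have [Htn Htz] := Hne t Ht.
  case Hj: (count_mem g0 t) => [|j].
    exfalso; apply: HTn; exists [:: t]; split => //.
      by move=> t'; rewrite inE => /eqP ->; split.
    rewrite /= cats0.
    have : forall y, count_mem y t <= count_mem y T.
      move=> y; have := count_in_flatten (pred1 y) Ht; have := seq.permP Hu (pred1 y).
      rewrite !count_cat count_nseq /=; case: (eqVneq g0 y) => [<-|Hy].
        by rewrite Hj.
      rewrite mul0n addn0 => ->; set a := count _ (flatten ts); set b := count _ u; lia.
    case/count_subseqP=> s' /perm_to_subseq [s3 Hs3] Hp.
    by exists s3; rewrite (permPl Hs3) perm_cat2r perm_sym.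
  move: Htz; rewrite /zero_sum (sum_split g0) Hj.
  set S := (\sum_(y <- filter _ t) y)%R.
  have HSK : S \in K.
    apply: sum_inK; apply/allP => y; rewrite mem_filter => /andP[Hy Hyt].
    have := HtW t y Ht Hyt; rewrite mem_cat mem_nseq => /orP[HyT|/andP[_ Hy2]].
      exact: (allP HTK).
    by move: Hy; rewrite /= Hy2.
  move=> Hsum.
  have HSc : S \in <[g0 : gr G]>%g.
    move: Hsum; rewrite addrC addr_eq0 => /eqP ->.
    by rewrite (groupV _ ((g0 : gr G) ^+ j.+1)%g) mem_cycle.
  move: Hsum; rewrite (capP S HSK HSc) addr0 mulrn_eq0 Ho => /dvdn_leq; apply.
  done.
have := sumn_ge_const Hall; rewrite -count_flatten Hts => Hge.
have := seq.permP Hu (pred1 g0); rewrite count_cat /W count_cat cT count_nseq /= eqxx mul1n.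
move: Hge Hke; set ke := k * e; set a := count _ (flatten ts); set b := count _ u; lia.
Qed.

End S5.


Lemma pigeon (T : eqType) (K : finType) (key : T -> K) (s : seq T) M :
  (forall f, f \in [set x in map key s] -> count (fun a => key a == f) s <= M) ->
  size s <= #|[set x in map key s]| * M.
Proof.
set F := [set x in map key s] => H.
have -> : size s = \sum_(f : K) count (fun a => key a == f) s.
  elim: (s) => [|a r IH] /=; first by rewrite big1.
  rewrite big_split /= -IH (bigD1 (key a)) //= eqxx big1 ?add1n // => f Hf.
  by rewrite eq_sym (negbTE Hf).
rewrite (bigID (mem F)) /= [X in _ + X]big1 ?addn0.
  by rewrite -sum_nat_const; apply: leq_sum => f Hf; apply: H.
move=> f Hf; apply/eqP; rewrite -leqn0 leqNgt -has_count; apply/negP => /hasP [a Ha /eqP Hk].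
by move: Hf; rewrite inE -Hk map_f.
Qed.

Lemma DGm_le_eta (G : finZmodType) (K : {set G}) DGm eta :
  is_Dk K 1 DGm -> eta_prop G eta -> DGm <= eta.
Proof.
move=> [_ H] Heta; apply: H => s _ Hs.
have [t [[u Hu] Ht Htz _]] := Heta s Hs.
exists [:: t]; split => //; first by move=> t'; rewrite inE => /eqP ->.
by exists u; rewrite /= cats0.
Qed.

Unset Implicit Arguments.
Theorem lemma6p4 (G : finZmodType) (k : nat) (B : seq G)
  (K : {group gr G}) (g0 : G) (eta DGm : nat) :
  ordG g0 = exponentG G ->
  (K \x <[g0 : gr G]> = [set: gr G])%g ->
  is_Dk (K : {set G}) 1 DGm ->
  is_eta G eta ->
  zero_sum B ->
  maxL_eq B k ->
  is_Dk [set: G] k (size B) ->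
  exists g : G, exists z : seq (seq G),
    [/\ ordG g = exponentG G, factorization B z, size z = k &
      (((k%:Z - (eta%:Z - DGm%:Z)) %/ ((exponentG G * cardA G)%:Z))%Z
         <= (count (fun A => perm_eq A (nseq (ordG g) g)) z)%:Z)%R].
Proof.
move=> Ho Hd HDK [Heta _] HB [[z [Hz Hzk]] Hmax] HDk.
have HDeta := DGm_le_eta HDK Heta.
set e := exponentG G; set cA := cardA G.
set n := (k%:Z - (eta%:Z - DGm%:Z))%R.
have triv : ((n %/ Posz (e * cA))%Z <= 0)%R ->
   exists g : G, exists z : seq (seq G),
    [/\ ordG g = e, factorization B z, size z = k &
      ((n %/ Posz (e * cA))%Z <= (count (fun A => perm_eq A (nseq (ordG g) g)) z)%:Z)%R].
  by move=> H; exists g0, z; split => //; apply: Order.POrderTheory.le_trans H _.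
have [Hd0|Hd0] := eqVneq (e * cA) 0.
  by apply: triv; rewrite Hd0 divz0.
case: (Num.Theory.lerP (n %/ Posz (e * cA))%Z 0) => Hq; first exact: triv.
have Hdz : Posz (e * cA) != 0 by apply/eqP => -[H]; rewrite H eqxx in Hd0.
move: Hq (lez_floor n Hdz).
case: (n %/ Posz (e * cA))%Z => qn //= Hq Hfl.
have Hqn : 0 < qn by [].
have Hfl' : qn * (e * cA) + eta <= k + DGm.
  move: Hfl; rewrite /n -PoszM; set X := qn * (e * cA); lia.
have He : 0 < e := e_gt0 G.
have HcA : 0 < cA by move: Hd0; rewrite muln_eq0 negb_or => /andP[_]; rewrite lt0n.
have Hk0 : 0 < k.
  have : 0 < qn * (e * cA) by rewrite !muln_gt0 Hqn He HcA.
  move: Hfl' HDeta; set X := qn * (e * cA); lia.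
have Hsb := short_bound Heta Hz Hzk Hmax.
have Hlb := lowerB Ho Hd HDK HDk Hk0.
set sh := (fun A : seq G => size A < e) in Hsb.
have Hs : count sh z + DGm <= eta.
  move: Hsb Hlb; rewrite -/e; set X := k * e; set b := size B; set c := count sh z; lia.
set NS := filter (predC sh) z.
have HNS : size NS + count sh z = k by rewrite size_filter addnC count_predC Hzk.
set Fk := [set x in map (@keyA G) NS].
case: (boolP [exists f in Fk, e * qn <= count (fun A => keyA A == f) z]).
  case/existsP=> f /andP[Hf Hc]; move: Hf; rewrite inE => /mapP [A0 HA0 Hf]; subst f.
  move: HA0; rewrite mem_filter => /andP[HA0s HA0z].
  have HA0m : minimal_zs A0 by case: Hz => Hz1 _; apply: Hz1.
  have HS := exch_bound Hz Hzk Hmax HA0m Hqn Hc.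
  have Hge := @sumn_ge_size G (fun y => e %/ ordG y) A0 (fun y _ => div_pos y).
  have Hsz : e <= size A0 by move: HA0s; rewrite /= /sh -leqNgt.
  have Hone := @sumn_eq_size G (fun y => e %/ ordG y) A0 (fun y _ => div_pos y)
     (leq_trans HS Hsz).
  have [g Hg] : exists g, g \in A0 by case: A0 Hsz {HA0s HA0z HA0m HS Hge Hone Hc} => [|a A] //=;
     [rewrite leqNgt He | exists a; rewrite mem_head].
  have Hog : ordG g = e by apply: div1_ord; apply: Hone.
  have [z2 [Hf2 Hs2 Hc2]] := exchange Hz Hzk HA0m Hc.
  have Hck : count (fun A => keyA A == keyA A0) z <= k by rewrite -Hzk count_size.
  exists g, z2; split => //.
    rewrite Hs2 size_piecesR.
    have -> : sumn [seq e %/ ordG x | x <- A0] = e by apply/eqP; rewrite eqn_leq HS (leq_trans Hsz Hge).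
    move: Hc Hck; set c := count _ _; rewrite [qn * e]mulnC; set X := e * qn; lia.
  rewrite lez_nat; apply: leq_trans (Hc2 _).
  rewrite -{1}(muln1 qn) leq_pmul2l // -has_count; apply/hasP.
  by exists (nseq (ordG g) g); [apply: mem_piecesR | rewrite /= perm_refl].
rewrite negb_exists => /forallP Hno.
have Hp : size NS <= #|Fk| * (e * qn).-1.
  apply: pigeon => f Hf; move: (Hno f); rewrite Hf /= -ltnNge => Hlt.
  rewrite -ltnS prednK ?muln_gt0 ?He //; apply: leq_ltn_trans Hlt.
  exact: leq_count_subseq (filter_subseq _ _).
have HF : #|Fk| <= cA.
  apply: subset_leq_card; apply/subsetP => f; rewrite /Fk !inE => /mapP[A HA ->].
  move: HA; rewrite mem_filter => /andP[_ HAz].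
  have HAm : minimal_zs A by case: Hz => Hz1 _; apply: Hz1.
  by apply: (min_perm _ HAm); rewrite perm_sym som_key.
have Hfl2 : cA * (e * qn) + eta <= k + DGm.
  by rewrite -(_ : qn * (e * cA) = cA * (e * qn)) // mulnC -mulnA mulnCA.
have Hp2 : size NS <= cA * (e * qn) - cA.
  rewrite -{2}(muln1 cA) -mulnBr subn1; apply: leq_trans Hp (leq_mul HF (leqnn _)).
have : cA <= cA * (e * qn) by rewrite -{1}(muln1 cA) leq_pmul2l // muln_gt0 He.
move: HNS Hs HcA Hfl2 Hp2; set X := cA * (e * qn); set a := size NS; set c := count sh z; lia.
Qed.
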